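(* Let $\beta_{\mathtt{H}},\beta_{\mathtt{L}},\gamma_{\mathtt{H}},\gamma_{\mathtt{L}}>0$ with $\beta_{\mathtt{H}}/\gamma_{\mathtt{H}}>\beta_{\mathtt{L}}/\gamma_{\mathtt{L}}$ and $\beta_{\mathtt{H}}>\beta_{\mathtt{L}}$, $q_{\mathtt{HL}},q_{\mathtt{LH}}\ge 0$, $\alpha\in(0,1)$, $\rho_{\mathtt{H}},\rho_{\mathtt{L}}>0$, $\mathtt{C}_{\mathtt{P}}>0$. For $z_{\mathtt{S}}\in[0,1]$ let $\hat\beta_{\mathtt{Q}}(z_{\mathtt{S}}):=\beta_{\mathtt{Q}}(\alpha z_{\mathtt{S}}+1-z_{\mathtt{S}})$, $\mathtt{Q}\in\{\mathtt{H},\mathtt{L}\}$, and consider \begin{align*} \dot{\mathtt{I}}_{\mathtt{H}}&=\hat\beta_{\mathtt{H}}(z_{\mathtt{S}})\mathtt{I}_{\mathtt{H}}(1-\mathtt{I}_{\mathtt{H}}-\mathtt{I}_{\mathtt{L}})+q_{\mathtt{LH}}\mathtt{I}_{\mathtt{L}}-(q_{\mathtt{HL}}+\gamma_{\mathtt{H}})\mathtt{I}_{\mathtt{H}},\\ \dot{\mathtt{I}}_{\mathtt{L}}&=\hat\beta_{\mathtt{L}}(z_{\mathtt{S}})\mathtt{I}_{\mathtt{L}}(1-\mathtt{I}_{\mathtt{H}}-\mathtt{I}_{\mathtt{L}})+q_{\mathtt{HL}}\mathtt{I}_{\mathtt{H}}-(q_{\mathtt{LH}}+\gamma_{\mathtt{L}})\mathtt{I}_{\mathtt{L}}.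 \end{align*} Suppose $\max(q_{\mathtt{LH}}+\gamma_{\mathtt{L}},q_{\mathtt{HL}}+\gamma_{\mathtt{H}})\le\min(\hat\beta_{\mathtt{H}}(1),\hat\beta_{\mathtt{L}}(1))$. Let $(\mathtt{I}^\star_{\mathtt{H}}(z_{\mathtt{S}}),\mathtt{I}^\star_{\mathtt{L}}(z_{\mathtt{S}}))$ denote the endemic equilibrium (an equilibrium in $(0,1)^2$) at $z_{\mathtt{S}}$, and define \begin{align*} \mathtt{C}_{\min}&:=(1-\alpha)\big(\beta_{\mathtt{H}}\rho_{\mathtt{H}}\mathtt{I}^\star_{\mathtt{H}}(1)+\beta_{\mathtt{L}}\rho_{\mathtt{L}}\mathtt{I}^\star_{\mathtt{L}}(1)\big),\\ \mathtt{C}_{\max}&:=(1-\alpha)\big(\beta_{\mathtt{H}}\rho_{\mathtt{H}}\mathtt{I}^\star_{\mathtt{H}}(0)+\beta_{\mathtt{L}}\rho_{\mathtt{L}}\mathtt{I}^\star_{\mathtt{L}}(0)\big). \end{align*} Then the protection level $z^{\mathtt{NE}}_{\mathtt{S}}$ at stationary Nash equilibria satisfies: (a) if $\mathtt{C}_{\mathtt{P}}<\mathtt{C}_{\min}$ then $z^{\mathtt{NE}}_{\mathtt{S}}=1$; (b) if $\mathtt{C}_{\mathtt{P}}>\mathtt{C}_{\max}$ then $z^{\mathtt{NE}}_{\mathtt{S}}=0$; (c) if $\mathtt{C}_{\min}\le\mathtt{C}_{\mathtt{P}}\le\mathtt{C}_{\max}$, there exists a unique $z^{\mathtt{NE}}_{\mathtt{S}}\in[0,1]$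 such that $\Delta R(\mathtt{I}^\star_{\mathtt{H}}(z^{\mathtt{NE}}_{\mathtt{S}}),\mathtt{I}^\star_{\mathtt{L}}(z^{\mathtt{NE}}_{\mathtt{S}}))=0$. Moreover, the infected proportions at the stationary Nash equilibrium are at their respective unique endemic equilibria $\mathtt{I}^\star_{\mathtt{H}}(z^{\mathtt{NE}}_{\mathtt{S}}),\mathtt{I}^\star_{\mathtt{L}}(z^{\mathtt{NE}}_{\mathtt{S}})$.
   Context: Bi-virus SIS model with strains $\mathtt{H},\mathtt{L}$; $\mathtt{I}_{\mathtt{H}},\mathtt{I}_{\mathtt{L}}$ infected fractions, $\beta$'s transmission rates, $\gamma$'s recovery rates, $q$'s mutation rates, $z_{\mathtt{S}}$ the fraction of susceptibles adopting protection, which scales their infection rate by $\alpha$. Each susceptible chooses action $\mathtt{P}$ (protect) or $\mathtt{U}$ (unprotected) with instantaneous rewards $R[\mathtt{P}](\mathtt{I}_{\mathtt{H}},\mathtt{I}_{\mathtt{L}})=-\mathtt{C}_{\mathtt{P}}-\alpha(\rho_{\mathtt{H}}\beta_{\mathtt{H}}\mathtt{I}_{\mathtt{H}}+\rho_{\mathtt{L}}\beta_{\mathtt{L}}\mathtt{I}_{\mathtt{L}})$ and $R[\mathtt{U}](\mathtt{I}_{\mathtt{H}},\mathtt{I}_{\mathtt{L}})=-(\rho_{\mathtt{H}}\beta_{\mathtt{H}}\mathtt{I}_{\mathtt{H}}+\rho_{\mathtt{L}}\beta_{\mathtt{L}}\mathtt{I}_{\mathtt{L}})$, where $\mathtt{C}_{\mathtt{P}}$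 is the protection cost and $\rho_{\mathtt{H}},\rho_{\mathtt{L}}$ losses from infection; $\Delta R:=R[\mathtt{P}]-R[\mathtt{U}]=-\mathtt{C}_{\mathtt{P}}+(1-\alpha)(\rho_{\mathtt{H}}\beta_{\mathtt{H}}\mathtt{I}_{\mathtt{H}}+\rho_{\mathtt{L}}\beta_{\mathtt{L}}\mathtt{I}_{\mathtt{L}})$. A tuple $(\mathtt{I}^\star_{\mathtt{H}},\mathtt{I}^\star_{\mathtt{L}},z^{\mathtt{NE}}_{\mathtt{S}})$ is a stationary Nash equilibrium if $(\mathtt{I}^\star_{\mathtt{H}},\mathtt{I}^\star_{\mathtt{L}})$ is the stable equilibrium of the dynamics at $z_{\mathtt{S}}=z^{\mathtt{NE}}_{\mathtt{S}}$ and: $z^{\mathtt{NE}}_{\mathtt{S}}=0\Rightarrow\Delta R(\mathtt{I}^\star_{\mathtt{H}},\mathtt{I}^\star_{\mathtt{L}})\le 0$ and $\Delta R<0\Rightarrow z^{\mathtt{NE}}_{\mathtt{S}}=0$; $z^{\mathtt{NE}}_{\mathtt{S}}=1\Rightarrow\Delta R\ge 0$ and $\Delta R>0\Rightarrow z^{\mathtt{NE}}_{\mathtt{S}}=1$; $z^{\mathtt{NE}}_{\mathtt{S}}\in(0,1)\Rightarrow\Delta R=0$. *)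

(* Defs.v *)
From Stdlib Require Import Reals Lra.
From Coquelicot Require Import Coquelicot.
Open Scope R_scope.

Definition beta_hat (al b z : R) : R := b * (al * z + 1 - z).

Definition fH (bH bL gH gL qHL qLH al z IH IL : R) : R :=
  beta_hat al bH z * IH * (1 - IH - IL) + qLH * IL - (qHL + gH) * IH.
Definition fL (bH bL gH gL qHL qLH al z IH IL : R) : R :=
  beta_hat al bL z * IL * (1 - IH - IL) + qHL * IH - (qLH + gL) * IL.

Definition feasible (IH IL : R) : Prop := 0 <= IH /\ 0 <= IL /\ IH + IL <= 1.

Definition is_equilibrium (bH bL gH gL qHL qLH al z IH IL : R) : Prop :=
  fH bH bL gH gL qHL qLH al z IH IL = 0 /\ fL bH bL gH gL qHL qLH al z IH IL = 0.

Definition is_endemic_eq (bH bL gH gL qHL qLH al z IH IL : R) : Prop :=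
  is_equilibrium bH bL gH gL qHL qLH al z IH IL /\
  0 < IH < 1 /\ 0 < IL < 1.

Definition is_solution (bH bL gH gL qHL qLH al z : R) (x y : R -> R) : Prop :=
  forall t, 0 <= t ->
    is_derive x t (fH bH bL gH gL qHL qLH al z (x t) (y t)) /\
    is_derive y t (fL bH bL gH gL qHL qLH al z (x t) (y t)).

Definition dist2 (a b c d : R) : R := sqrt ((a - c)^2 + (b - d)^2).

Definition is_stable_eq (bH bL gH gL qHL qLH al z eH eL : R) : Prop :=
  feasible eH eL /\
  is_equilibrium bH bL gH gL qHL qLH al z eH eL /\
  (forall eps, 0 < eps -> exists del, 0 < del /\
     forall x y, is_solution bH bL gH gL qHL qLH al z x y ->
       feasible (x 0) (y 0) -> dist2 (x 0) (y 0) eH eL < del ->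
       forall t, 0 <= t -> dist2 (x t) (y t) eH eL < eps) /\
  (exists eta, 0 < eta /\
     forall x y, is_solution bH bL gH gL qHL qLH al z x y ->
       feasible (x 0) (y 0) -> dist2 (x 0) (y 0) eH eL < eta ->
       is_lim x p_infty eH /\ is_lim y p_infty eL).

(* Difference of instantaneous rewards  Delta R = R[P] - R[U]. *)
Definition DeltaR (bH bL al rhoH rhoL CP IH IL : R) : R :=
  - CP + (1 - al) * (rhoH * bH * IH + rhoL * bL * IL).

Definition is_stationary_NE (bH bL gH gL qHL qLH al rhoH rhoL CP IH IL z : R)
  : Prop :=
  0 <= z <= 1 /\
  is_stable_eq bH bL gH gL qHL qLH al z IH IL /\
  (z = 0 -> DeltaR bH bL al rhoH rhoL CP IH IL <= 0) /\
  (DeltaR bH bL al rhoH rhoL CP IH IL < 0 -> z = 0) /\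
  (z = 1 -> DeltaR bH bL al rhoH rhoL CP IH IL >= 0) /\
  (DeltaR bH bL al rhoH rhoL CP IH IL > 0 -> z = 1) /\
  (0 < z < 1 -> DeltaR bH bL al rhoH rhoL CP IH IL = 0).

(* Main.v *)
Require Import Defs.
From Stdlib Require Import Reals.
From Coquelicot Require Import Coquelicot.
From Stdlib Require Import Lra Psatz.
Open Scope R_scope.

Lemma dpl_cont f x l : derivable_pt_lim f x l -> continuity_pt f x.
Proof. intro H. apply derivable_continuous_pt. exact (exist _ l H). Qed.

Lemma mono_le (f df : R -> R) (a b : R) : a <= b ->
  (forall x, a <= x <= b -> derivable_pt_lim f x (df x)) ->
  (forall x, a < x < b -> 0 <= df x) -> f a <= f b.
Proof.
  intros Hab Hd Hs.
  destruct (Req_dec a b) as [->|Hne]; [lra|].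
  destruct (MVT_cor2 f df a b) as [c [Heq Hc]]; [lra|exact Hd|].
  specialize (Hs c Hc). nra.
Qed.

Lemma cont_eps f x : continuity_pt f x ->
  forall eps, 0 < eps -> exists del, 0 < del /\
    forall y, Rabs (y - x) < del -> Rabs (f y - f x) < eps.
Proof.
  intros H eps He. destruct (H eps He) as [del [Hd Hy]].
  exists del; split; [lra|]. intros y Hy'.
  destruct (Req_dec y x) as [->|Hne].
  - rewrite Rminus_eq_0, Rabs_R0; lra.
  - apply (Hy y). split; [split; [exact I|auto]|exact Hy'].
Qed.

Lemma eps_cont f x : (forall eps, 0 < eps -> exists del, 0 < del /\
    forall y, Rabs (y - x) < del -> Rabs (f y - f x) < eps) -> continuity_pt f x.
Proof.
  intros H eps He. destruct (H eps He) as [del [Hd Hy]].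
  exists del; split; [lra|]. intros y [_ Hy']. apply Hy. exact Hy'.
Qed.

Lemma sign_lemma (f df : R -> R) :
  (forall t, 0 <= t -> derivable_pt_lim f t (df t)) ->
  f 0 <= 0 ->
  (forall t, 0 <= t -> 0 < f t -> df t <= 0) ->
  forall t, 0 <= t -> f t <= 0.
Proof.
  intros Hd H0 Hs t1 Ht1.
  destruct (Rle_dec (f t1) 0) as [|Hpos]; [assumption|exfalso].
  apply Rnot_le_lt in Hpos.
  set (E := fun s => 0 <= s <= t1 /\ f s <= 0).
  assert (HB : bound E). { exists t1. intros s [Hs1 _]. lra. }
  assert (HE : exists s, E s). { exists 0. split; [lra|exact H0]. }
  destruct (completeness E HB HE) as [t0 [Hub Hlub]].
  assert (Ht0 : 0 <= t0 <= t1).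
  { split. apply Hub. split; [lra|exact H0].
    apply Hlub. intros s [Hs1 _]. lra. }
  assert (Hf0 : f t0 <= 0).
  { destruct (Rle_dec (f t0) 0) as [|Hn]; [assumption|exfalso].
    apply Rnot_le_lt in Hn.
    destruct (cont_eps f t0 (dpl_cont _ _ _ (Hd t0 (proj1 Ht0))) (f t0) Hn)
      as [del [Hdel Hc]].
    assert (Hub2 : is_upper_bound E (t0 - del/2)).
    { intros s [Hs1 Hs2].
      destruct (Rle_dec s (t0 - del/2)) as [|Hgt]; [assumption|exfalso].
      apply Rnot_le_lt in Hgt.
      assert (s <= t0) by (apply Hub; split; assumption).
      assert (Rabs (s - t0) < del) by (apply Rabs_def1; lra).
      specialize (Hc s H1). apply Rabs_def2 in Hc. lra. }
    specialize (Hlub _ Hub2). lra. }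
  assert (Hlt : t0 < t1).
  { destruct (Req_dec t0 t1) as [->|]; [lra|lra]. }
  assert (Hmono : - f t0 <= - f t1).
  { apply (mono_le (fun s => - f s) (fun s => - df s)); [lra| |].
    - intros x Hx. apply derivable_pt_lim_opp with (f := f). apply Hd. lra.
    - intros x Hx. assert (0 < f x).
      { destruct (Rlt_dec 0 (f x)) as [|Hn]; [assumption|exfalso].
        apply Rnot_lt_le in Hn.
        assert (x <= t0) by (apply Hub; split; [lra|assumption]). lra. }
      specialize (Hs x ltac:(lra) H). lra. }
  lra.
Qed.

Definition lip (L : R) (G : R -> R -> R) :=
  forall a b a' b', Rabs (G a b - G a' b') <= L * (Rabs (a - a') + Rabs (b - b')).

Lemma Rmax0_lip a b : Rabs (Rmax 0 a - Rmax 0 b) <= Rabs (a - b).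
Proof. unfold Rmax; destruct (Rle_dec 0 a), (Rle_dec 0 b); unfold Rabs;
  repeat destruct Rcase_abs; lra. Qed.

Lemma cont_Rmax0 p s : (forall s, continuity_pt p s) ->
  continuity_pt (fun s => p (Rmax 0 s)) s.
Proof. intro Hp. apply eps_cont. intros eps He.
  destruct (cont_eps p (Rmax 0 s) (Hp _) eps He) as [del [Hd H]].
  exists del; split; auto. intros y Hy. apply H.
  eapply Rle_lt_trans; [apply Rmax0_lip|exact Hy]. Qed.

Lemma lip_cont L G f g s : 0 < L -> lip L G -> continuity_pt f s -> continuity_pt g s ->
  continuity_pt (fun t => G (f t) (g t)) s.
Proof. intros HL HG Hf Hg. apply eps_cont. intros eps He.
  assert (He' : 0 < eps/(2*L)) by (apply Rdiv_lt_0_compat; lra).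
  destruct (cont_eps f s Hf _ He') as [d1 [Hd1 H1]].
  destruct (cont_eps g s Hg _ He') as [d2 [Hd2 H2]].
  exists (Rmin d1 d2). split. apply Rmin_pos; auto.
  intros y Hy. eapply Rle_lt_trans. apply HG.
  specialize (H1 y ltac:(eapply Rlt_le_trans; [exact Hy| apply Rmin_l])).
  specialize (H2 y ltac:(eapply Rlt_le_trans; [exact Hy| apply Rmin_r])).
  assert (L * (eps/(2*L)) = eps/2) by (field; lra). nra.
Qed.

Lemma deriv_int x0 h t : (forall s, continuity_pt h s) ->
  derivable_pt_lim (fun t => x0 + RInt h 0 t) t (h t).
Proof. intro Hc. apply is_derive_Reals.
  assert (H : is_derive (RInt h 0) t (h t)).
  { apply is_derive_RInt with 0. apply filter_forall. intro b. apply RInt_correct.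
    apply ex_RInt_continuous. intros z _. apply continuity_pt_filterlim. apply Hc.
    apply continuity_pt_filterlim, Hc. }
  pose proof (is_derive_plus (fun _ => x0) (RInt h 0) t zero (h t) (is_derive_const x0 t) H) as H2.
  replace (h t) with (plus zero (h t)). exact H2.
  apply plus_zero_l.
Qed.

Lemma Rabs_le_between a b : Rabs a <= b -> - b <= a <= b.
Proof. unfold Rabs; destruct Rcase_abs; intros; lra. Qed.

Lemma mvt_abs (D dD : R -> R) t B : D 0 = 0 ->
  (forall s, derivable_pt_lim D s (dD s)) -> (forall s, Rabs (dD s) <= B) ->
  Rabs (D t) <= B * Rabs t.
Proof.
  intros H0 Hd Hb.
  destruct (Rtotal_order t 0) as [Hlt|[Heq|Hgt]].
  - destruct (MVT_cor2 D dD t 0 Hlt (fun c _ => Hd c)) as [c [Hc _]].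
    replace (D t) with (- (dD c * (0 - t))) by lra.
    rewrite Rabs_Ropp, Rabs_mult. rewrite (Rabs_left t Hlt).
    replace (0 - t) with (- t) by ring. rewrite (Rabs_right (- t)) by lra.
    apply Rmult_le_compat_r; [lra|apply Hb].
  - subst. rewrite H0, Rabs_R0. lra.
  - destruct (MVT_cor2 D dD 0 t Hgt (fun c _ => Hd c)) as [c [Hc _]].
    replace (D t) with (dD c * (t - 0)) by lra.
    rewrite Rabs_mult. replace (t - 0) with t by ring.
    apply Rmult_le_compat_r; [apply Rabs_pos|apply Hb].
Qed.

Lemma cmp_lemma (D dD phi dphi : R -> R) t : 0 <= t -> D 0 = 0 -> phi 0 = 0 ->
  (forall s, 0 <= s <= t -> derivable_pt_lim D s (dD s)) ->
  (forall s, 0 <= s <= t -> derivable_pt_lim phi s (dphi s)) ->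
  (forall s, 0 < s < t -> Rabs (dD s) <= dphi s) -> Rabs (D t) <= phi t.
Proof.
  intros Ht H0 P0 Hd Hp Hb.
  assert (A1 : phi 0 - D 0 <= phi t - D t).
  { apply (mono_le (fun s => phi s - D s) (fun s => dphi s - dD s)); [lra| |].
    - intros x Hx. apply (derivable_pt_lim_minus phi D); auto.
    - intros x Hx. specialize (Hb x Hx). apply Rabs_le_between in Hb. lra. }
  assert (A2 : phi 0 + D 0 <= phi t + D t).
  { apply (mono_le (fun s => phi s + D s) (fun s => dphi s + dD s)); [lra| |].
    - intros x Hx. apply (derivable_pt_lim_plus phi D); auto.
    - intros x Hx. specialize (Hb x Hx). apply Rabs_le_between in Hb. lra. }
  apply Rabs_le. lra.
Qed.

Lemma cv_const (c : R) : Un_cv (fun _ => c) c.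
Proof. intros e He. exists O. intros. unfold R_dist. rewrite Rminus_eq_0, Rabs_R0. lra. Qed.

Section Picard.
Variables (G1 G2 : R -> R -> R) (L M x0 y0 : R).
Hypotheses (HL : 0 < L) (HM : 0 <= M) (HG1 : lip L G1) (HG2 : lip L G2)
  (HB1 : forall a b, Rabs (G1 a b) <= M) (HB2 : forall a b, Rabs (G2 a b) <= M).

Fixpoint pic (n : nat) : (R -> R) * (R -> R) :=
  match n with
  | O => (fun _ => x0, fun _ => y0)
  | S n => let pq := pic n in
     (fun t => x0 + RInt (fun s => G1 (fst pq (Rmax 0 s)) (snd pq (Rmax 0 s))) 0 t,
      fun t => y0 + RInt (fun s => G2 (fst pq (Rmax 0 s)) (snd pq (Rmax 0 s))) 0 t)
  end.
Definition P n := fst (pic n).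
Definition Q n := snd (pic n).

Lemma P_S n : P (S n) = fun t => x0 + RInt (fun s => G1 (P n (Rmax 0 s)) (Q n (Rmax 0 s))) 0 t.
Proof. reflexivity. Qed.
Lemma Q_S n : Q (S n) = fun t => y0 + RInt (fun s => G2 (P n (Rmax 0 s)) (Q n (Rmax 0 s))) 0 t.
Proof. reflexivity. Qed.

Lemma pic_cont n : (forall s, continuity_pt (P n) s) /\ (forall s, continuity_pt (Q n) s).
Proof.
  induction n as [|n [IH1 IH2]].
  - split; intro s; apply continuity_pt_const; intros a b; reflexivity.
  - split; intro s; [rewrite P_S|rewrite Q_S]; eapply dpl_cont; apply deriv_int;
    intro s'; apply lip_cont with L; auto; apply cont_Rmax0; auto.
Qed.

Lemma P_deriv n t : derivable_pt_lim (P (S n)) t (G1 (P n (Rmax 0 t)) (Q n (Rmax 0 t))).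
Proof. rewrite P_S. apply (deriv_int x0 (fun s => G1 (P n (Rmax 0 s)) (Q n (Rmax 0 s)))).
  destruct (pic_cont n). intro s'; apply lip_cont with L; auto; apply cont_Rmax0; auto. Qed.
Lemma Q_deriv n t : derivable_pt_lim (Q (S n)) t (G2 (P n (Rmax 0 t)) (Q n (Rmax 0 t))).
Proof. rewrite Q_S. apply (deriv_int y0 (fun s => G2 (P n (Rmax 0 s)) (Q n (Rmax 0 s)))).
  destruct (pic_cont n). intro s'; apply lip_cont with L; auto; apply cont_Rmax0; auto. Qed.

Lemma P_0 n : P n 0 = x0.
Proof. destruct n. reflexivity. rewrite P_S. rewrite RInt_point. change (x0 + 0 = x0). ring. Qed.
Lemma Q_0 n : Q n 0 = y0.
Proof. destruct n. reflexivity. rewrite Q_S. rewrite RInt_point. change (y0 + 0 = y0). ring. Qed.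


Lemma step_bound (D : R -> R) (G : R -> R -> R) (a1 b1 a0 b0 : R -> R) n t :
  lip L G -> D 0 = 0 ->
  (forall s, derivable_pt_lim D s
     (G (a1 (Rmax 0 s)) (b1 (Rmax 0 s)) - G (a0 (Rmax 0 s)) (b0 (Rmax 0 s)))) ->
  a1 0 = a0 0 -> b1 0 = b0 0 ->
  (forall s, 0 <= s -> Rabs (a1 s - a0 s) + Rabs (b1 s - b0 s)
      <= (M/L) * (2*L*Rabs s)^(S n) / INR (Factorial.fact (S n))) ->
  Rabs (D t) <= M * (2*L)^(S n) * Rabs t ^(S (S n)) / INR (Factorial.fact (S (S n))).
Proof.
  intros HG HD0 Hd Ha Hb Hbound.
  assert (Fp : 0 < INR (Factorial.fact (S (S n)))) by apply INR_fact_lt_0.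
  assert (Fp1 : 0 < INR (Factorial.fact (S n))) by apply INR_fact_lt_0.
  destruct (Rlt_or_le t 0) as [Hlt|Hge].
  - destruct (MVT_cor2 D _ t 0 Hlt (fun c _ => Hd c)) as [c [Hc Hci]].
    rewrite (Rmax_left 0 c) in Hc by lra. rewrite Ha, Hb in Hc.
    replace (D t) with 0 by lra. rewrite Rabs_R0.
    apply Rmult_le_pos; [|left; apply Rinv_0_lt_compat; exact Fp].
    apply Rmult_le_pos; [apply Rmult_le_pos; [exact HM| apply pow_le; lra]|].
    apply pow_le, Rabs_pos.
  - rewrite (Rabs_right t) by lra.
    replace (M * (2*L)^(S n) * t ^(S (S n)) / INR (Factorial.fact (S (S n))))
      with ((M * (2*L)^(S n) / INR (Factorial.fact (S (S n)))) * t ^ (S (S n))) by (field; lra).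
    apply (cmp_lemma D (fun s => G (a1 (Rmax 0 s)) (b1 (Rmax 0 s)) - G (a0 (Rmax 0 s)) (b0 (Rmax 0 s)))
      (fun s => (M * (2*L)^(S n) / INR (Factorial.fact (S (S n)))) * s ^ (S (S n)))
      (fun s => (M * (2*L)^(S n) / INR (Factorial.fact (S (S n)))) * (INR (S (S n)) * s ^ (S n))) t Hge HD0).
    + cbv beta. simpl pow. ring.
    + intros s _. apply Hd.
    + intros s _. apply derivable_pt_lim_scal with (f := fun s => s ^(S (S n))).
      apply derivable_pt_lim_pow.
    + intros s Hs. rewrite (Rmax_right 0 s) by lra.
      eapply Rle_trans. apply HG.
      eapply Rle_trans. apply Rmult_le_compat_l. lra. apply Hbound. lra.
      rewrite (Rabs_right s) by lra.
      rewrite Rpow_mult_distr. rewrite (fact_simpl (S n)), mult_INR.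
      right. field. repeat split; try lra; try (apply not_0_INR; discriminate); try apply INR_fact_neq_0.
Qed.

Lemma e_bound n : forall t, Rabs (P (S n) t - P n t) + Rabs (Q (S n) t - Q n t)
  <= (M/L) * (2*L*Rabs t)^(S n) / INR (Factorial.fact (S n)).
Proof.
  induction n as [|n IH]; intro t.
  - assert (H1 : Rabs (P 1 t - P 0 t) <= M * Rabs t).
    { apply (mvt_abs (fun s => P 1 s - P 0 s) (fun s => G1 x0 y0) t M).
      - cbv beta. rewrite !P_0. ring.
      - intro s. replace (G1 x0 y0) with (G1 (P 0 (Rmax 0 s)) (Q 0 (Rmax 0 s)) - 0)
          by (unfold P, Q; simpl; ring).
        apply (derivable_pt_lim_minus (P 1) (P 0)); [apply P_deriv|].
        exact (derivable_pt_lim_const x0 s).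
      - intro s; apply HB1. }
    assert (H2 : Rabs (Q 1 t - Q 0 t) <= M * Rabs t).
    { apply (mvt_abs (fun s => Q 1 s - Q 0 s) (fun s => G2 x0 y0) t M).
      - cbv beta. rewrite !Q_0. ring.
      - intro s. replace (G2 x0 y0) with (G2 (P 0 (Rmax 0 s)) (Q 0 (Rmax 0 s)) - 0)
          by (unfold P, Q; simpl; ring).
        apply (derivable_pt_lim_minus (Q 1) (Q 0)); [apply Q_deriv|].
        exact (derivable_pt_lim_const y0 s).
      - intro s; apply HB2. }
    replace ((M/L) * (2*L*Rabs t)^1 / INR (Factorial.fact 1)) with (2 * M * Rabs t)
      by (simpl; field; lra). lra.
  - assert (H1 : Rabs (P (S (S n)) t - P (S n) t)
        <= M * (2*L)^(S n) * Rabs t ^(S (S n)) / INR (Factorial.fact (S (S n)))).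
    { apply (step_bound (fun s => P (S (S n)) s - P (S n) s) G1 (P (S n)) (Q (S n)) (P n) (Q n)).
      - exact HG1.
      - rewrite !P_0; ring.
      - intro s. apply (derivable_pt_lim_minus (P (S (S n))) (P (S n))); apply P_deriv.
      - rewrite !P_0; reflexivity.
      - rewrite !Q_0; reflexivity.
      - intros s _. apply IH. }
    assert (H2 : Rabs (Q (S (S n)) t - Q (S n) t)
        <= M * (2*L)^(S n) * Rabs t ^(S (S n)) / INR (Factorial.fact (S (S n)))).
    { apply (step_bound (fun s => Q (S (S n)) s - Q (S n) s) G2 (P (S n)) (Q (S n)) (P n) (Q n)).
      - exact HG2.
      - rewrite !Q_0; ring.
      - intro s. apply (derivable_pt_lim_minus (Q (S (S n))) (Q (S n))); apply Q_deriv.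
      - rewrite !P_0; reflexivity.
      - rewrite !Q_0; reflexivity.
      - intros s _. apply IH. }
    assert (Fp : 0 < INR (Factorial.fact (S (S n)))) by apply INR_fact_lt_0.
    replace ((M/L) * (2*L*Rabs t)^(S (S n)) / INR (Factorial.fact (S (S n))))
      with (2 * (M * (2*L)^(S n) * Rabs t ^(S (S n)) / INR (Factorial.fact (S (S n))))).
    lra. rewrite (Rpow_mult_distr (2*L) (Rabs t)). change ((2*L)^(S (S n))) with (2*L*(2*L)^(S n)). field. repeat split; try lra; try apply INR_fact_neq_0.
Qed.

Definition aT (T : R) (k : nat) := / INR (Factorial.fact k) * (2*L*T)^k.

Lemma ps_cauchy T : Cauchy_crit (fun n => sum_f_R0 (aT T) n).
Proof. apply CV_Cauchy. destruct (exist_exp (2*L*T)) as [l Hl]. exists l.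
  intros e He. destruct (Hl e He) as [N HN]. exists N. intros n Hn. apply HN. exact Hn. Qed.

Lemma ML_nonneg : 0 <= M / L.
Proof. unfold Rdiv. apply Rmult_le_pos; [lra|left; apply Rinv_0_lt_compat; lra]. Qed.

Lemma tele T n j t : Rabs t <= T ->
  Rabs (P (n + j) t - P n t) + Rabs (Q (n + j) t - Q n t)
   <= (M/L) * (sum_f_R0 (aT T) (n + j) - sum_f_R0 (aT T) n).
Proof.
  intro Ht. induction j as [|j IH].
  - rewrite Nat.add_0_r. rewrite !Rminus_eq_0, Rabs_R0. lra.
  - rewrite Nat.add_succ_r, tech5.
    pose proof (e_bound (n + j) t) as Hb.
    assert (Hk : (M/L) * (2*L*Rabs t)^(S (n+j)) / INR (Factorial.fact (S (n+j)))
                 <= (M/L) * aT T (S (n+j))).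
    { unfold aT. pose proof ML_nonneg.
      assert (0 < / INR (Factorial.fact (S (n+j)))) by (apply Rinv_0_lt_compat, INR_fact_lt_0).
      assert ((2*L*Rabs t)^(S (n+j)) <= (2*L*T)^(S (n+j))).
      { apply pow_incr. pose proof (Rabs_pos t). split; nra. }
      replace ((M/L) * (2*L*Rabs t)^(S (n+j)) / INR (Factorial.fact (S (n+j))))
        with ((M/L) * (/ INR (Factorial.fact (S (n+j))) * (2*L*Rabs t)^(S (n+j))))
        by (unfold Rdiv; ring).
      apply Rmult_le_compat_l; auto. apply Rmult_le_compat_l; lra. }
    assert (T1 : Rabs (P (S (n + j)) t - P n t) <= Rabs (P (S (n + j)) t - P (n+j) t) + Rabs (P (n+j) t - P n t)).
    { replace (P (S (n + j)) t - P n t) with ((P (S (n + j)) t - P (n+j) t) + (P (n+j) t - P n t)) by ring.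
      apply Rabs_triang. }
    assert (T2 : Rabs (Q (S (n + j)) t - Q n t) <= Rabs (Q (S (n + j)) t - Q (n+j) t) + Rabs (Q (n+j) t - Q n t)).
    { replace (Q (S (n + j)) t - Q n t) with ((Q (S (n + j)) t - Q (n+j) t) + (Q (n+j) t - Q n t)) by ring.
      apply Rabs_triang. }
    lra.
Qed.

Lemma tele_abs T n m t : Rabs t <= T -> (n <= m)%nat ->
  Rabs (P m t - P n t) + Rabs (Q m t - Q n t)
   <= (M/L) * Rabs (sum_f_R0 (aT T) m - sum_f_R0 (aT T) n).
Proof.
  intros Ht Hnm. replace m with (n + (m - n))%nat by lia.
  eapply Rle_trans. apply tele. exact Ht.
  apply Rmult_le_compat_l. apply ML_nonneg. apply Rle_abs.
Qed.

Lemma unif_cauchy T : forall eps, 0 < eps -> exists N, forall n m t,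
  (N <= n)%nat -> (N <= m)%nat -> Rabs t <= T ->
  Rabs (P m t - P n t) + Rabs (Q m t - Q n t) < eps.
Proof.
  intros eps He.
  pose proof ML_nonneg as Hc.
  set (e' := eps / (M/L + 1)).
  assert (He' : 0 < e') by (apply Rdiv_lt_0_compat; lra).
  assert (Hee : (M/L) * e' < eps).
  { unfold e'. replace eps with ((M/L + 1) * (eps / (M/L + 1))) at 2 by (field; lra).
    apply Rmult_lt_compat_r; [exact He'|lra]. }
  destruct (ps_cauchy T e' He') as [N HN]. exists N. intros n m t Hn Hm Ht.
  destruct (Nat.le_ge_cases n m) as [Hnm|Hmn].
  - eapply Rle_lt_trans. apply (tele_abs T); auto.
    specialize (HN m n Hm Hn). unfold R_dist in HN.
    eapply Rle_lt_trans; [|exact Hee]. apply Rmult_le_compat_l; lra.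
  - rewrite (Rabs_minus_sym (P m t)), (Rabs_minus_sym (Q m t)).
    eapply Rle_lt_trans. apply (tele_abs T); auto.
    specialize (HN n m Hn Hm). unfold R_dist in HN.
    eapply Rle_lt_trans; [|exact Hee]. apply Rmult_le_compat_l; lra.
Qed.

Lemma P_cauchy t : Cauchy_crit (fun n => P n t).
Proof. intros eps He. destruct (unif_cauchy (Rabs t) eps He) as [N HN]. exists N.
  intros n m Hn Hm. specialize (HN m n t Hm Hn (Rle_refl _)). unfold R_dist.
  pose proof (Rabs_pos (Q n t - Q m t)). lra. Qed.
Lemma Q_cauchy t : Cauchy_crit (fun n => Q n t).
Proof. intros eps He. destruct (unif_cauchy (Rabs t) eps He) as [N HN]. exists N.
  intros n m Hn Hm. specialize (HN m n t Hm Hn (Rle_refl _)). unfold R_dist.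
  pose proof (Rabs_pos (P n t - P m t)). lra. Qed.

Definition X t := proj1_sig (Rcomplete.R_complete _ (P_cauchy t)).
Definition Y t := proj1_sig (Rcomplete.R_complete _ (Q_cauchy t)).
Lemma X_cv t : Un_cv (fun n => P n t) (X t).
Proof. exact (proj2_sig (Rcomplete.R_complete _ (P_cauchy t))). Qed.
Lemma Y_cv t : Un_cv (fun n => Q n t) (Y t).
Proof. exact (proj2_sig (Rcomplete.R_complete _ (Q_cauchy t))). Qed.

Lemma unif_cv T eps : 0 < eps -> exists N, forall n t, (N <= n)%nat -> Rabs t <= T ->
  Rabs (X t - P n t) + Rabs (Y t - Q n t) < eps.
Proof.
  intros He. destruct (unif_cauchy T (eps/2)) as [N HN]; [lra|]. exists N.
  intros n t Hn Ht.
  destruct (X_cv t (eps/8) ltac:(lra)) as [N1 H1].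
  destruct (Y_cv t (eps/8) ltac:(lra)) as [N2 H2].
  set (m := max N (max N1 N2)).
  specialize (HN n m t Hn ltac:(unfold m; lia) Ht).
  specialize (H1 m ltac:(unfold m; lia)). specialize (H2 m ltac:(unfold m; lia)).
  unfold R_dist in *.
  assert (A1 : Rabs (X t - P n t) <= Rabs (P m t - X t) + Rabs (P m t - P n t)).
  { rewrite (Rabs_minus_sym (P m t)). replace (X t - P n t) with ((X t - P m t) + (P m t - P n t)) by ring.
    apply Rabs_triang. }
  assert (A2 : Rabs (Y t - Q n t) <= Rabs (Q m t - Y t) + Rabs (Q m t - Q n t)).
  { rewrite (Rabs_minus_sym (Q m t)). replace (Y t - Q n t) with ((Y t - Q m t) + (Q m t - Q n t)) by ring.
    apply Rabs_triang. }
  lra.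
Qed.

Lemma Rmax0_abs y : Rabs (Rmax 0 y) <= Rabs y.
Proof. unfold Rmax; destruct Rle_dec; unfold Rabs; repeat destruct Rcase_abs; lra. Qed.

Lemma XY_deriv t : derivable_pt_lim X t (G1 (X (Rmax 0 t)) (Y (Rmax 0 t))) /\
                   derivable_pt_lim Y t (G2 (X (Rmax 0 t)) (Y (Rmax 0 t))).
Proof.
  assert (Hd : 0 < Rabs t + 1) by (pose proof (Rabs_pos t); lra).
  set (d := mkposreal (Rabs t + 1) Hd).
  assert (Hb : Boule 0 d t) by (unfold Boule; simpl; rewrite Rminus_0_r; lra).
  split.
  - apply (CVU_derivable (fun n => P (S n)) (fun n y => G1 (P n (Rmax 0 y)) (Q n (Rmax 0 y)))
      X (fun y => G1 (X (Rmax 0 y)) (Y (Rmax 0 y))) 0 d); [| | |exact Hb].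
    + intros eps He. destruct (unif_cv (Rabs t + 1) (eps / L)) as [N HN];
        [apply Rdiv_lt_0_compat; lra|].
      exists N. intros n y Hn Hy. unfold Boule in Hy. simpl in Hy. rewrite Rminus_0_r in Hy.
      pose proof (Rmax0_abs y).
      specialize (HN n (Rmax 0 y) Hn ltac:(lra)).
      eapply Rle_lt_trans. apply HG1.
      replace eps with (L * (eps / L)) by (field; lra).
      apply Rmult_lt_compat_l; lra.
    + intros x _ e He. destruct (X_cv x e He) as [N HN]. exists N. intros n Hn. apply HN. lia.
    + intros n x _. apply P_deriv.
  - apply (CVU_derivable (fun n => Q (S n)) (fun n y => G2 (P n (Rmax 0 y)) (Q n (Rmax 0 y)))
      Y (fun y => G2 (X (Rmax 0 y)) (Y (Rmax 0 y))) 0 d); [| | |exact Hb].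
    + intros eps He. destruct (unif_cv (Rabs t + 1) (eps / L)) as [N HN];
        [apply Rdiv_lt_0_compat; lra|].
      exists N. intros n y Hn Hy. unfold Boule in Hy. simpl in Hy. rewrite Rminus_0_r in Hy.
      pose proof (Rmax0_abs y).
      specialize (HN n (Rmax 0 y) Hn ltac:(lra)).
      eapply Rle_lt_trans. apply HG2.
      replace eps with (L * (eps / L)) by (field; lra).
      apply Rmult_lt_compat_l; lra.
    + intros x _ e He. destruct (Y_cv x e He) as [N HN]. exists N. intros n Hn. apply HN. lia.
    + intros n x _. apply Q_deriv.
Qed.

Lemma X_0 : X 0 = x0.
Proof. apply (UL_sequence (fun n => P n 0)). apply X_cv.
  intros e He. exists O. intros n _. rewrite P_0. unfold R_dist. rewrite Rminus_eq_0, Rabs_R0. lra. Qed.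
Lemma Y_0 : Y 0 = y0.
Proof. apply (UL_sequence (fun n => Q n 0)). apply Y_cv.
  intros e He. exists O. intros n _. rewrite Q_0. unfold R_dist. rewrite Rminus_eq_0, Rabs_R0. lra. Qed.

End Picard.


Lemma ode_exists (G1 G2 : R -> R -> R) (L M : R) :
  0 < L -> 0 <= M -> lip L G1 -> lip L G2 ->
  (forall a b, Rabs (G1 a b) <= M) -> (forall a b, Rabs (G2 a b) <= M) ->
  forall x0 y0, exists x y : R -> R, x 0 = x0 /\ y 0 = y0 /\
    forall t, 0 <= t -> derivable_pt_lim x t (G1 (x t) (y t)) /\
                        derivable_pt_lim y t (G2 (x t) (y t)).
Proof.
  intros HL HM H1 H2 B1 B2 x0 y0.
  exists (X G1 G2 L M x0 y0 HL HM H1 H2 B1 B2), (Y G1 G2 L M x0 y0 HL HM H1 H2 B1 B2).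
  split; [apply X_0|]. split; [apply Y_0|].
  intros t Ht. rewrite <- (Rmax_right 0 t Ht) at 2 3 5 6.
  apply XY_deriv.
Qed.

Definition clip (a : R) := Rmax 0 (Rmin 1 a).

Lemma clip_range a : 0 <= clip a <= 1.
Proof. unfold clip, Rmax, Rmin; repeat destruct Rle_dec; lra. Qed.
Lemma clip_id a : 0 <= a <= 1 -> clip a = a.
Proof. unfold clip, Rmax, Rmin; repeat destruct Rle_dec; lra. Qed.
Lemma clip_lip a b : Rabs (clip a - clip b) <= Rabs (a - b).
Proof. unfold clip, Rmax, Rmin; repeat destruct Rle_dec; unfold Rabs;
  repeat destruct Rcase_abs; lra. Qed.
Lemma clip_neg a : a < 0 -> clip a = 0.
Proof. unfold clip, Rmax, Rmin; repeat destruct Rle_dec; lra. Qed.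
Lemma clip_sum x y : 0 <= x -> 0 <= y -> 1 <= x + y -> 1 <= clip x + clip y.
Proof. unfold clip, Rmax, Rmin; repeat destruct Rle_dec; lra. Qed.

Lemma quad_lip x y x' y' : 0 <= x <= 1 -> 0 <= y <= 1 -> 0 <= x' <= 1 -> 0 <= y' <= 1 ->
  Rabs (x * (1 - x - y) - x' * (1 - x' - y')) <= 2 * Rabs (x - x') + Rabs (y - y').
Proof.
  intros. replace (x * (1 - x - y) - x' * (1 - x' - y'))
    with ((x - x') * (1 - x - y) - x' * ((x - x') + (y - y'))) by ring.
  unfold Rabs; repeat destruct Rcase_abs; nra.
Qed.

Lemma quad_bnd x y : 0 <= x <= 1 -> 0 <= y <= 1 -> Rabs (x * (1 - x - y)) <= 1.
Proof. intros. unfold Rabs; destruct Rcase_abs; nra. Qed.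

Lemma tri3 a b c : Rabs (a + b - c) <= Rabs a + Rabs b + Rabs c.
Proof. unfold Rabs; repeat destruct Rcase_abs; lra. Qed.

Lemma exp_mul_deriv (x : R -> R) dx A s : derivable_pt_lim x s dx ->
  derivable_pt_lim (fun s => x s * exp (A * s)) s (dx * exp (A * s) + x s * (exp (A * s) * A)).
Proof.
  intro Hx. apply (derivable_pt_lim_mult x (fun s => exp (A * s))); [exact Hx|].
  apply (derivable_pt_lim_comp (fun s => A * s) exp s A (exp (A * s))).
  - pose proof (derivable_pt_lim_scal id A s 1 (derivable_pt_lim_id s)) as H.
    rewrite Rmult_1_r in H. exact H.
  - apply derivable_pt_lim_exp.
Qed.

Section Model.
Variables (bH bL gH gL qHL qLH al z : R).
Hypotheses (HbH : 0 < bH) (HbL : 0 < bL) (HgH : 0 < gH) (HgL : 0 < gL)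
  (HqHL : 0 <= qHL) (HqLH : 0 <= qLH) (Hal : 0 < al < 1) (Hz : 0 <= z <= 1).

Definition bh := beta_hat al bH z.
Definition bl := beta_hat al bL z.
Definition L0 := 2 * bh + 2 * bl + qHL + qLH + gH + gL + 1.
Definition G1 a b := fH bH bL gH gL qHL qLH al z (clip a) (clip b).
Definition G2 a b := fL bH bL gH gL qHL qLH al z (clip a) (clip b).

Lemma bh_pos : 0 < bh.
Proof. unfold bh, beta_hat. apply Rmult_lt_0_compat; nra. Qed.
Lemma bl_pos : 0 < bl.
Proof. unfold bl, beta_hat. apply Rmult_lt_0_compat; nra. Qed.
Lemma L0_pos : 0 < L0.
Proof. unfold L0. pose proof bh_pos; pose proof bl_pos; lra. Qed.

Lemma G1_lip : lip L0 G1.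
Proof.
  intros a b a' b'. unfold G1, fH. fold bh.
  pose proof (clip_range a); pose proof (clip_range b);
  pose proof (clip_range a'); pose proof (clip_range b').
  pose proof (clip_lip a a'); pose proof (clip_lip b b').
  pose proof (quad_lip (clip a) (clip b) (clip a') (clip b') H H0 H1 H2).
  pose proof bh_pos; pose proof bl_pos.
  set (u := clip a) in *; set (v := clip b) in *; set (u' := clip a') in *; set (v' := clip b') in *.
  replace (bh * u * (1 - u - v) + qLH * v - (qHL + gH) * u -
     (bh * u' * (1 - u' - v') + qLH * v' - (qHL + gH) * u'))
    with (bh * (u * (1 - u - v) - u' * (1 - u' - v')) + qLH * (v - v') - (qHL + gH) * (u - u')) by ring.
  eapply Rle_trans. apply tri3.
  rewrite !Rabs_mult. rewrite (Rabs_right bh) by lra. rewrite (Rabs_right qLH) by lra.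
  rewrite (Rabs_right (qHL + gH)) by lra.
  pose proof (Rabs_pos (a - a')); pose proof (Rabs_pos (b - b')).
  pose proof (Rabs_pos (u - u')); pose proof (Rabs_pos (v - v')).
  unfold L0. nra.
Qed.

Lemma G2_lip : lip L0 G2.
Proof.
  intros a b a' b'. unfold G2, fL. fold bl.
  pose proof (clip_range a); pose proof (clip_range b);
  pose proof (clip_range a'); pose proof (clip_range b').
  pose proof (clip_lip a a'); pose proof (clip_lip b b').
  pose proof (quad_lip (clip b) (clip a) (clip b') (clip a') H0 H H2 H1).
  pose proof bh_pos; pose proof bl_pos.
  set (u := clip a) in *; set (v := clip b) in *; set (u' := clip a') in *; set (v' := clip b') in *.
  replace (bl * v * (1 - u - v) + qHL * u - (qLH + gL) * v -
     (bl * v' * (1 - u' - v') + qHL * u' - (qLH + gL) * v'))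
    with (bl * (v * (1 - v - u) - v' * (1 - v' - u')) + qHL * (u - u') - (qLH + gL) * (v - v')) by ring.
  eapply Rle_trans. apply tri3.
  rewrite !Rabs_mult. rewrite (Rabs_right bl) by lra. rewrite (Rabs_right qHL) by lra.
  rewrite (Rabs_right (qLH + gL)) by lra.
  pose proof (Rabs_pos (a - a')); pose proof (Rabs_pos (b - b')).
  pose proof (Rabs_pos (u - u')); pose proof (Rabs_pos (v - v')).
  unfold L0. nra.
Qed.

Lemma G1_bnd a b : Rabs (G1 a b) <= L0.
Proof.
  unfold G1, fH. fold bh.
  pose proof (clip_range a) as Ha; pose proof (clip_range b) as Hb.
  pose proof (quad_bnd _ _ Ha Hb).
  pose proof bh_pos; pose proof bl_pos.
  set (u := clip a) in *; set (v := clip b) in *.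
  replace (bh * u * (1 - u - v)) with (bh * (u * (1 - u - v))) by ring.
  eapply Rle_trans. apply tri3.
  rewrite !Rabs_mult. rewrite (Rabs_right bh) by lra. rewrite (Rabs_right qLH) by lra.
  rewrite (Rabs_right (qHL + gH)) by lra. rewrite (Rabs_right u) by lra.
  rewrite (Rabs_right v) by lra.
  assert (Rabs (1 - u - v) <= 1) by (unfold Rabs; destruct Rcase_abs; lra).
  assert (u * Rabs (1 - u - v) <= 1) by (pose proof (Rabs_pos (1 - u - v)); nra).
  assert (bh * (u * Rabs (1 - u - v)) <= bh * 1) by (apply Rmult_le_compat_l; lra).
  assert (qLH * v <= qLH * 1) by (apply Rmult_le_compat_l; lra).
  assert ((qHL + gH) * u <= (qHL + gH) * 1) by (apply Rmult_le_compat_l; lra).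
  unfold L0. lra.
Qed.

Lemma G2_bnd a b : Rabs (G2 a b) <= L0.
Proof.
  unfold G2, fL. fold bl.
  pose proof (clip_range a) as Ha; pose proof (clip_range b) as Hb.
  pose proof (quad_bnd _ _ Ha Hb).
  pose proof bh_pos; pose proof bl_pos.
  set (u := clip a) in *; set (v := clip b) in *.
  replace (bl * v * (1 - u - v)) with (bl * (v * (1 - v - u))) by ring.
  pose proof (quad_bnd _ _ Hb Ha).
  eapply Rle_trans. apply tri3.
  rewrite !Rabs_mult. rewrite (Rabs_right bl) by lra. rewrite (Rabs_right qHL) by lra.
  rewrite (Rabs_right (qLH + gL)) by lra. rewrite (Rabs_right u) by lra.
  rewrite (Rabs_right v) by lra.
  assert (Rabs (1 - v - u) <= 1) by (unfold Rabs; destruct Rcase_abs; lra).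
  assert (v * Rabs (1 - v - u) <= 1) by (pose proof (Rabs_pos (1 - v - u)); nra).
  assert (bl * (v * Rabs (1 - v - u)) <= bl * 1) by (apply Rmult_le_compat_l; lra).
  assert (qHL * u <= qHL * 1) by (apply Rmult_le_compat_l; lra).
  assert ((qLH + gL) * v <= (qLH + gL) * 1) by (apply Rmult_le_compat_l; lra).
  unfold L0. lra.
Qed.

Lemma sol_exists x0 y0 : feasible x0 y0 -> exists x y, x 0 = x0 /\ y 0 = y0 /\
  is_solution bH bL gH gL qHL qLH al z x y /\ forall t, 0 <= t -> feasible (x t) (y t).
Proof.
  intros [F1 [F2 F3]].
  destruct (ode_exists G1 G2 L0 L0 L0_pos (Rlt_le _ _ L0_pos) G1_lip G2_lip G1_bnd G2_bnd x0 y0)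
    as [x [y [Hx0 [Hy0 Hd]]]].
  pose proof bh_pos; pose proof bl_pos.
  assert (Px : forall t, 0 <= t -> - x t <= 0).
  { apply (sign_lemma (fun t => - x t) (fun t => - G1 (x t) (y t))).
    - intros t Ht. apply (derivable_pt_lim_opp x). apply Hd; exact Ht.
    - lra.
    - intros t Ht Hpos. unfold G1, fH. rewrite (clip_neg (x t)) by lra.
      pose proof (clip_range (y t)). nra. }
  assert (Py : forall t, 0 <= t -> - y t <= 0).
  { apply (sign_lemma (fun t => - y t) (fun t => - G2 (x t) (y t))).
    - intros t Ht. apply (derivable_pt_lim_opp y). apply Hd; exact Ht.
    - lra.
    - intros t Ht Hpos. unfold G2, fL. rewrite (clip_neg (y t)) by lra.
      pose proof (clip_range (x t)). nra. }
  assert (Ps : forall t, 0 <= t -> x t + y t - 1 <= 0).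
  { apply (sign_lemma (fun t => x t + y t - 1) (fun t => G1 (x t) (y t) + G2 (x t) (y t) - 0)).
    - intros t Ht. apply (derivable_pt_lim_minus (fun t => x t + y t) (fun _ => 1)).
      + apply (derivable_pt_lim_plus x y); apply Hd; exact Ht.
      + apply derivable_pt_lim_const.
    - lra.
    - intros t Ht Hpos. specialize (Px t Ht). specialize (Py t Ht).
      pose proof (clip_sum (x t) (y t) ltac:(lra) ltac:(lra) ltac:(lra)).
      pose proof (clip_range (x t)); pose proof (clip_range (y t)).
      unfold G1, G2, fH, fL. fold bh bl.
      set (u := clip (x t)) in *; set (v := clip (y t)) in *.
      assert (0 <= bh * u + bl * v) by nra.
      nra. }
  exists x, y. split; [exact Hx0|]. split; [exact Hy0|].
  assert (Hf : forall t, 0 <= t -> feasible (x t) (y t)).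
  { intros t Ht. specialize (Px t Ht); specialize (Py t Ht); specialize (Ps t Ht).
    unfold feasible; lra. }
  split; [|exact Hf].
  intros t Ht. destruct (Hd t Ht) as [D1 D2]. destruct (Hf t Ht) as [f1 [f2 f3]].
  unfold G1, G2 in *. rewrite !clip_id in D1, D2 by lra.
  split; apply is_derive_Reals; assumption.
Qed.

Lemma escape eL : 0 <= eL < 1 -> 0 < bh * (1 - eL) - (qHL + gH) ->
  (exists eta, 0 < eta /\ forall x y, is_solution bH bL gH gL qHL qLH al z x y ->
     feasible (x 0) (y 0) -> dist2 (x 0) (y 0) 0 eL < eta ->
     is_lim x p_infty 0 /\ is_lim y p_infty eL) -> False.
Proof.
  intros HeL Hr [eta [Heta Hatt]].
  pose proof bh_pos as Hbh.
  set (d := Rmin (eta/2) ((1 - eL)/2)).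
  assert (Hd1 : d <= eta/2) by apply Rmin_l.
  assert (Hd2 : d <= (1 - eL)/2) by apply Rmin_r.
  assert (Hd0 : 0 < d) by (apply Rmin_pos; lra).
  destruct (sol_exists d eL) as [x [y [Hx0 [Hy0 [Hsol Hf]]]]].
  { unfold feasible; lra. }
  specialize (Hatt x y Hsol). rewrite Hx0, Hy0 in Hatt.
  destruct Hatt as [Lx Ly].
  { unfold feasible; lra. }
  { unfold dist2. replace ((d - 0)^2 + (eL - eL)^2) with (d^2) by ring.
    rewrite sqrt_pow2 by lra. lra. }
  apply is_lim_spec in Lx. apply is_lim_spec in Ly. simpl in Lx, Ly.
  set (r := bh * (1 - eL) - (qHL + gH)) in *.
  set (e1 := r / (2 * bh + 2)).
  assert (He1 : 0 < e1) by (apply Rdiv_lt_0_compat; lra).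
  assert (He1' : bh * (2 * e1) < r).
  { assert (Hsum : bh * (2*e1) + 2*e1 = r) by (unfold e1; field; lra). lra. }
  destruct (Lx (mkposreal e1 He1)) as [T1 HT1].
  destruct (Ly (mkposreal e1 He1)) as [T2 HT2].
  simpl in HT1, HT2.
  set (T := Rmax 0 (Rmax T1 T2) + 1).
  assert (HT0 : 0 < T) by (unfold T; pose proof (Rmax_l 0 (Rmax T1 T2)); lra).
  assert (HTT1 : T1 < T) by (unfold T; pose proof (Rmax_r 0 (Rmax T1 T2)); pose proof (Rmax_l T1 T2); lra).
  assert (HTT2 : T2 < T) by (unfold T; pose proof (Rmax_r 0 (Rmax T1 T2)); pose proof (Rmax_r T1 T2); lra).
  assert (Dx : forall t, 0 <= t -> derivable_pt_lim x t (fH bH bL gH gL qHL qLH al z (x t) (y t))).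
  { intros t Ht. apply is_derive_Reals. apply (Hsol t Ht). }
  assert (Hform : forall t, fH bH bL gH gL qHL qLH al z (x t) (y t) =
     x t * (bh * (1 - x t - y t) - (qHL + gH)) + qLH * y t).
  { intro t. unfold fH, bh. ring. }
  assert (Hmono : forall t, T <= t -> x T <= x t).
  { intros t Ht. apply (mono_le x (fun s => fH bH bL gH gL qHL qLH al z (x s) (y s))); [lra| |].
    - intros s Hs. apply Dx. lra.
    - intros s Hs. rewrite Hform.
      destruct (Hf s ltac:(lra)) as [f1 [f2 f3]].
      specialize (HT1 s ltac:(lra)). specialize (HT2 s ltac:(lra)).
      rewrite Rminus_0_r in HT1. apply Rabs_def2 in HT1. apply Rabs_def2 in HT2.
      assert (0 <= bh * (1 - x s - y s) - (qHL + gH)).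
      { unfold r in He1'. nra. }
      nra. }
  assert (HxT : 0 < x T).
  { assert (A1 : x 0 * exp ((qHL + gH) * 0) <= x T * exp ((qHL + gH) * T)).
    { apply (mono_le (fun s => x s * exp ((qHL + gH) * s))
        (fun s => fH bH bL gH gL qHL qLH al z (x s) (y s) * exp ((qHL + gH) * s)
                  + x s * (exp ((qHL + gH) * s) * (qHL + gH)))); [lra| |].
      - intros s Hs. apply exp_mul_deriv. apply Dx. lra.
      - intros s Hs. rewrite Hform.
        destruct (Hf s ltac:(lra)) as [f1 [f2 f3]].
        pose proof (exp_pos ((qHL + gH) * s)).
        assert (0 <= bh * x s * (1 - x s - y s) + qLH * y s).
        { assert (0 <= x s * (1 - x s - y s)) by nra. nra. }
        nra. }
    rewrite Hx0, Rmult_0_r, exp_0, Rmult_1_r in A1.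
    pose proof (exp_pos ((qHL + gH) * T)). nra. }
  destruct (Lx (mkposreal (x T) HxT)) as [T3 HT3]. simpl in HT3.
  set (t := Rmax T3 T + 1).
  assert (Ht3 : T3 < t) by (unfold t; pose proof (Rmax_l T3 T); lra).
  assert (HtT : T <= t) by (unfold t; pose proof (Rmax_r T3 T); lra).
  specialize (HT3 t Ht3). specialize (Hmono t HtT).
  rewrite Rminus_0_r in HT3. rewrite Rabs_right in HT3 by lra. lra.
Qed.

End Model.

Section Main.
Variables (bH bL gH gL qHL qLH al rhoH rhoL CP : R).
Hypotheses (HbH : 0 < bH) (HbL : 0 < bL) (HgH : 0 < gH) (HgL : 0 < gL)
  (Hratio : bH / gH > bL / gL) (Hbeta : bH > bL)
  (HqHL : 0 <= qHL) (HqLH : 0 <= qLH)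
  (Hal : 0 < al < 1) (HrhoH : 0 < rhoH) (HrhoL : 0 < rhoL) (HCP : 0 < CP)
  (Hcond : Rmax (qLH + gL) (qHL + gH)
           <= Rmin (beta_hat al bH 1) (beta_hat al bL 1)).
Variables (IHs ILs : R -> R).
Hypothesis (Hend : forall z, 0 <= z <= 1 ->
     is_endemic_eq bH bL gH gL qHL qLH al z (IHs z) (ILs z)).

Lemma Hr2 : bL * gH < bH * gL.
Proof.
  assert (H : bL / gL * (gL * gH) < bH / gH * (gL * gH)).
  { apply Rmult_lt_compat_r; [nra|lra]. }
  replace (bL / gL * (gL * gH)) with (bL * gH) in H by (field; lra).
  replace (bH / gH * (gL * gH)) with (bH * gL) in H by (field; lra).
  exact H.
Qed.

Lemma HA : qHL + gH <= al * bL.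
Proof. pose proof (Rmax_r (qLH + gL) (qHL + gH)). pose proof (Rmin_r (beta_hat al bH 1) (beta_hat al bL 1)).
  unfold beta_hat in *. nra. Qed.
Lemma HB : qLH + gL <= al * bL.
Proof. pose proof (Rmax_l (qLH + gL) (qHL + gH)). pose proof (Rmin_r (beta_hat al bH 1) (beta_hat al bL 1)).
  unfold beta_hat in *. nra. Qed.

Definition wv z IH IL := (al * z + 1 - z) * (1 - IH - IL).

Lemma c_bounds z : 0 <= z <= 1 -> al <= al * z + 1 - z <= 1.
Proof. intros. nra. Qed.

Lemma eqs z IH IL : is_endemic_eq bH bL gH gL qHL qLH al z IH IL ->
  (qHL + gH - bH * wv z IH IL) * IH = qLH * IL /\
  (qLH + gL - bL * wv z IH IL) * IL = qHL * IH /\ 0 < IH < 1 /\ 0 < IL < 1.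
Proof.
  intros [[E1 E2] [B1 B2]]. unfold fH, fL, beta_hat in *. unfold wv.
  split; [|split; [|split; assumption]].
  - transitivity ((qHL + gH - bH * ((al * z + 1 - z) * (1 - IH - IL))) * IH
        + (bH * (al * z + 1 - z) * IH * (1 - IH - IL) + qLH * IL - (qHL + gH) * IH)).
    rewrite E1; ring. ring.
  - transitivity ((qLH + gL - bL * ((al * z + 1 - z) * (1 - IH - IL))) * IL
        + (bL * (al * z + 1 - z) * IL * (1 - IH - IL) + qHL * IH - (qLH + gL) * IL)).
    rewrite E2; ring. ring.
Qed.

Lemma qHL_pos : 0 < qHL.
Proof.
  destruct (Rle_lt_or_eq_dec 0 qHL HqHL) as [|Hq]; [assumption|exfalso].
  destruct (eqs 0 (IHs 0) (ILs 0) (Hend 0 ltac:(lra))) as [E1 [E2 [B1 B2]]].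
  rewrite <- Hq in *. set (w := wv 0 (IHs 0) (ILs 0)) in *.
  assert (Hw : qLH + gL - bL * w = 0).
  { destruct (Req_dec (qLH + gL - bL * w) 0) as [|Hn]; [assumption|exfalso].
    apply Hn. apply (Rmult_eq_reg_r (ILs 0)); [lra|lra]. }
  assert (Hw2 : 0 <= 0 + gH - bH * w).
  { destruct (Rle_lt_dec 0 (0 + gH - bH * w)) as [|Hn]; [assumption|exfalso]. nra. }
  pose proof Hr2. nra.
Qed.

Lemma w_props z IH IL : is_endemic_eq bH bL gH gL qHL qLH al z IH IL ->
  0 <= qHL + gH - bH * wv z IH IL /\ 0 < qLH + gL - bL * wv z IH IL /\
  (qHL + gH - bH * wv z IH IL) * (qLH + gL - bL * wv z IH IL) = qLH * qHL.
Proof.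
  intro H. destruct (eqs z IH IL H) as [E1 [E2 [B1 B2]]].
  pose proof qHL_pos.
  set (w := wv z IH IL) in *.
  assert (P1 : 0 <= qHL + gH - bH * w).
  { destruct (Rle_lt_dec 0 (qHL + gH - bH * w)) as [|Hn]; [assumption|exfalso]. nra. }
  assert (P2 : 0 < qLH + gL - bL * w).
  { destruct (Rlt_le_dec 0 (qLH + gL - bL * w)) as [|Hn]; [assumption|exfalso]. nra. }
  split; [exact P1|split; [exact P2|]].
  apply (Rmult_eq_reg_r (IH * IL)); [|nra].
  transitivity (((qHL + gH - bH * w) * IH) * ((qLH + gL - bL * w) * IL)). ring.
  rewrite E1, E2. ring.
Qed.

Lemma w_unique w1 w2 :
  0 <= qHL + gH - bH * w1 -> 0 < qLH + gL - bL * w1 ->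
  (qHL + gH - bH * w1) * (qLH + gL - bL * w1) = qLH * qHL ->
  0 <= qHL + gH - bH * w2 -> 0 < qLH + gL - bL * w2 ->
  (qHL + gH - bH * w2) * (qLH + gL - bL * w2) = qLH * qHL -> w1 = w2.
Proof.
  intros A1 B1 C1 A2 B2 C2.
  destruct (Rtotal_order w1 w2) as [H|[H|H]]; [exfalso| exact H | exfalso].
  - assert (qHL + gH - bH * w1 > qHL + gH - bH * w2) by nra.
    assert (qLH + gL - bL * w1 > qLH + gL - bL * w2) by nra. nra.
  - assert (qHL + gH - bH * w2 > qHL + gH - bH * w1) by nra.
    assert (qLH + gL - bL * w2 > qLH + gL - bL * w1) by nra. nra.
Qed.

Definition w0 := wv 0 (IHs 0) (ILs 0).

Lemma w_eq z IH IL : is_endemic_eq bH bL gH gL qHL qLH al z IH IL -> wv z IH IL = w0.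
Proof.
  intro H. destruct (w_props z IH IL H) as [A1 [B1 C1]].
  destruct (w_props 0 (IHs 0) (ILs 0) (Hend 0 ltac:(lra))) as [A2 [B2 C2]].
  unfold w0. eapply w_unique; eassumption.
Qed.

Lemma w0_pos : 0 < w0.
Proof.
  destruct (w_props 0 (IHs 0) (ILs 0) (Hend 0 ltac:(lra))) as [A2 [B2 C2]].
  fold w0 in A2, B2, C2.
  destruct (Rlt_le_dec 0 w0) as [|Hn]; [assumption|exfalso].
  assert (qHL + gH - bH * w0 >= qHL + gH) by nra.
  assert (qLH + gL - bL * w0 >= qLH + gL) by nra.
  assert ((qHL + gH - bH * w0) * (qLH + gL - bL * w0) >= (qHL + gH) * (qLH + gL)).
  { apply Rle_ge. apply Rmult_le_compat; lra. }
  nra.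
Qed.

Definition beta0 := qLH + gL - bL * w0.
Lemma beta0_pos : 0 < beta0.
Proof.
  destruct (w_props 0 (IHs 0) (ILs 0) (Hend 0 ltac:(lra))) as [A2 [B2 C2]]. exact B2.
Qed.

Lemma ratio z IH IL : is_endemic_eq bH bL gH gL qHL qLH al z IH IL -> qHL * IH = beta0 * IL.
Proof.
  intro H. destruct (eqs z IH IL H) as [E1 [E2 _]]. rewrite (w_eq z IH IL H) in E2.
  unfold beta0. lra.
Qed.

Lemma uniq z IH IL : 0 <= z <= 1 -> is_endemic_eq bH bL gH gL qHL qLH al z IH IL ->
  IH = IHs z /\ IL = ILs z.
Proof.
  intros Hz H. pose proof (Hend z Hz) as H'.
  pose proof (w_eq z IH IL H) as W1. pose proof (w_eq z _ _ H') as W2.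
  pose proof (ratio z IH IL H) as R1. pose proof (ratio z _ _ H') as R2.
  pose proof (c_bounds z Hz). pose proof beta0_pos. pose proof qHL_pos.
  unfold wv in W1, W2.
  assert (HS : IH + IL = IHs z + ILs z).
  { assert ((al * z + 1 - z) * ((IH + IL) - (IHs z + ILs z)) = 0) by nra.
    apply Rmult_integral in H3. destruct H3; lra. }
  assert (HL : IL = ILs z).
  { assert ((qHL + beta0) * (IL - ILs z) = 0) by nra.
    apply Rmult_integral in H3. destruct H3; lra. }
  split; lra.
Qed.

Lemma ne_endemic IH IL z :
  is_stationary_NE bH bL gH gL qHL qLH al rhoH rhoL CP IH IL z -> IH = IHs z /\ IL = ILs z.
Proof.
  intros [Hz [[Hfeas [[E1 E2] [_ Hatt]]] _]].
  destruct Hfeas as [f1 [f2 f3]].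
  pose proof qHL_pos as Hq. pose proof HA. pose proof HB. pose proof (c_bounds z Hz).
  destruct (Rle_lt_or_eq_dec 0 IH f1) as [p1|e1];
  destruct (Rle_lt_or_eq_dec 0 IL f2) as [p2|e2].
  - apply uniq; auto. split; [split; assumption|]. split; split; lra.
  - exfalso. subst IL. unfold fL in E2. nra.
  - exfalso. subst IH.
    assert (HqLH0 : qLH = 0) by (unfold fH in E1; nra).
    destruct (eqs z (IHs z) (ILs z) (Hend z Hz)) as [F1 [F2 [B1 B2]]].
    set (w := wv z (IHs z) (ILs z)) in *.
    assert (Aw : qHL + gH - bH * w = 0).
    { apply (Rmult_eq_reg_r (IHs z)); [rewrite F1, HqLH0; ring|lra]. }
    assert (Bw : 0 < qLH + gL - bL * w) by nra.
    unfold fL, beta_hat in E2.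
    set (c := al * z + 1 - z) in *.
    assert (Ec : bL * c * (1 - IL) = gL).
    { apply (Rmult_eq_reg_r IL); [|lra]. rewrite HqLH0 in E2. nra. }
    assert (HIL : IL < 1). { destruct (Req_dec IL 1) as [E|E]; [|lra]. rewrite E in Ec. nra. }
    apply (escape bH bL gH gL qHL qLH al z HbH HbL HgH HgL HqHL HqLH Hal Hz IL
      ltac:(lra)).
    + unfold bh, beta_hat. fold c.
      assert (c * (1 - IL) > w) by nra. nra.
    + exact Hatt.
  - exfalso. subst IH IL.
    apply (escape bH bL gH gL qHL qLH al z HbH HbL HgH HgL HqHL HqLH Hal Hz 0 ltac:(lra)).
    + unfold bh, beta_hat. nra.
    + exact Hatt.
Qed.

Definition Wf z := bH * rhoH * IHs z + bL * rhoL * ILs z.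
Definition Kc := bH * rhoH * beta0 + bL * rhoL * qHL.

Lemma Kc_pos : 0 < Kc.
Proof. unfold Kc. pose proof beta0_pos. pose proof qHL_pos.
  assert (0 < bH*rhoH*beta0) by (apply Rmult_lt_0_compat; [apply Rmult_lt_0_compat|]; lra).
  assert (0 < bL*rhoL*qHL) by (apply Rmult_lt_0_compat; [apply Rmult_lt_0_compat|]; lra). lra. Qed.

Lemma W_rel z : 0 <= z <= 1 -> (qHL + beta0) * Wf z = Kc * (IHs z + ILs z).
Proof. intro Hz. pose proof (ratio z _ _ (Hend z Hz)). unfold Wf, Kc.
  transitivity (bH * rhoH * ((qHL + beta0) * IHs z) + bL * rhoL * ((qHL + beta0) * ILs z)); [ring|].
  replace ((qHL + beta0) * IHs z) with (beta0 * (IHs z + ILs z)) by nra.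
  replace ((qHL + beta0) * ILs z) with (qHL * (IHs z + ILs z)) by nra. ring. Qed.

Lemma c_S z : 0 <= z <= 1 -> (al * z + 1 - z) * (1 - (IHs z + ILs z)) = w0.
Proof. intro Hz. rewrite <- (w_eq z _ _ (Hend z Hz)). unfold wv. ring. Qed.

Lemma mono z1 z2 : 0 <= z1 -> z1 < z2 -> z2 <= 1 -> Wf z2 < Wf z1.
Proof.
  intros H1 H12 H2.
  pose proof (c_S z1 ltac:(lra)) as C1. pose proof (c_S z2 ltac:(lra)) as C2.
  pose proof (W_rel z1 ltac:(lra)) as W1. pose proof (W_rel z2 ltac:(lra)) as W2.
  pose proof w0_pos. pose proof Kc_pos. pose proof beta0_pos. pose proof qHL_pos.
  pose proof (c_bounds z1 ltac:(lra)). pose proof (c_bounds z2 ltac:(lra)).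
  set (c1 := al * z1 + 1 - z1) in *. set (c2 := al * z2 + 1 - z2) in *.
  set (S1 := IHs z1 + ILs z1) in *. set (S2 := IHs z2 + ILs z2) in *.
  assert (Hc : c1 - c2 > 0) by (unfold c1, c2; nra).
  assert (HS1 : 1 - S1 > 0) by nra.
  assert (Hd : c2 * (S1 - S2) > 0) by nra.
  assert (HS : S1 - S2 > 0) by nra.
  assert ((qHL + beta0) * (Wf z1 - Wf z2) > 0) by nra.
  nra.
Qed.

Lemma W_range z : 0 <= z <= 1 -> Wf 1 <= Wf z <= Wf 0.
Proof.
  intros Hz. split.
  - destruct (Req_dec z 1) as [->|Hn]; [lra|]. left. apply mono; lra.
  - destruct (Req_dec z 0) as [->|Hn]; [lra|]. left. apply mono; lra.
Qed.

Lemma W_inj z1 z2 : 0 <= z1 <= 1 -> 0 <= z2 <= 1 -> Wf z1 = Wf z2 -> z1 = z2.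
Proof.
  intros. destruct (Rtotal_order z1 z2) as [H2|[H2|H2]]; [|exact H2|].
  - pose proof (mono z1 z2 ltac:(lra) H2 ltac:(lra)). lra.
  - pose proof (mono z2 z1 ltac:(lra) H2 ltac:(lra)). lra.
Qed.

Lemma DR_W z : DeltaR bH bL al rhoH rhoL CP (IHs z) (ILs z) = - CP + (1 - al) * Wf z.
Proof. unfold DeltaR, Wf. ring. Qed.

Lemma main_sec :
  let Cmin := (1 - al) * (bH * rhoH * IHs 1 + bL * rhoL * ILs 1) in
  let Cmax := (1 - al) * (bH * rhoH * IHs 0 + bL * rhoL * ILs 0) in
  let NE := is_stationary_NE bH bL gH gL qHL qLH al rhoH rhoL CP in
  (CP < Cmin -> forall IH IL z, NE IH IL z -> z = 1) /\
  (CP > Cmax -> forall IH IL z, NE IH IL z -> z = 0) /\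
  (Cmin <= CP <= Cmax ->
     exists z0, (0 <= z0 <= 1 /\
                 DeltaR bH bL al rhoH rhoL CP (IHs z0) (ILs z0) = 0) /\
       (forall z, 0 <= z <= 1 ->
          DeltaR bH bL al rhoH rhoL CP (IHs z) (ILs z) = 0 -> z = z0) /\
       (forall IH IL z, NE IH IL z -> z = z0)) /\
  (forall z, 0 <= z <= 1 -> forall IH IL,
     is_endemic_eq bH bL gH gL qHL qLH al z IH IL -> IH = IHs z /\ IL = ILs z) /\
  (forall IH IL z, NE IH IL z -> IH = IHs z /\ IL = ILs z).
Proof.
  cbv zeta.
  change (bH * rhoH * IHs 1 + bL * rhoL * ILs 1) with (Wf 1).
  change (bH * rhoH * IHs 0 + bL * rhoL * ILs 0) with (Wf 0).
  assert (Hal' : 0 < 1 - al) by lra.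
  assert (HNEz : forall IH IL z, is_stationary_NE bH bL gH gL qHL qLH al rhoH rhoL CP IH IL z ->
     0 <= z <= 1 /\ IH = IHs z /\ IL = ILs z).
  { intros IH IL z H. split; [apply H|]. apply ne_endemic; exact H. }
  split; [|split; [|split; [|split]]].
  - intros Hlt IH IL z H. destruct (HNEz IH IL z H) as [Hz [-> ->]].
    destruct H as [_ [_ [_ [_ [_ [Hpos _]]]]]]. apply Hpos.
    rewrite DR_W. pose proof (W_range z Hz).
    assert ((1 - al) * Wf 1 <= (1 - al) * Wf z) by (apply Rmult_le_compat_l; lra). lra.
  - intros Hgt IH IL z H. destruct (HNEz IH IL z H) as [Hz [-> ->]].
    destruct H as [_ [_ [_ [Hneg _]]]]. apply Hneg.
    rewrite DR_W. pose proof (W_range z Hz).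
    assert ((1 - al) * Wf z <= (1 - al) * Wf 0) by (apply Rmult_le_compat_l; lra). lra.
  - intros [Hmin Hmax].
    pose proof w0_pos. pose proof Kc_pos. pose proof beta0_pos. pose proof qHL_pos.
    pose proof (c_S 0 ltac:(lra)) as C0. pose proof (c_S 1 ltac:(lra)) as C1.
    pose proof (W_rel 0 ltac:(lra)) as W0. pose proof (W_rel 1 ltac:(lra)) as W1.
    replace (al * 0 + 1 - 0) with 1 in C0 by ring.
    replace (al * 1 + 1 - 1) with al in C1 by ring.
    set (rho := CP * (qHL + beta0) / ((1 - al) * Kc)).
    assert (Hrho : rho * ((1 - al) * Kc) = CP * (qHL + beta0)) by (unfold rho; field; nra).
    assert (HKp : 0 < (1 - al) * Kc) by nra.
    assert (E : (1 - al) * Kc * rho = CP * (qHL + beta0)) by (rewrite <- Hrho; ring).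
    assert (E0 : (1 - al) * Kc * (IHs 0 + ILs 0) = ((1 - al) * Wf 0) * (qHL + beta0))
      by (transitivity ((1 - al) * (Kc * (IHs 0 + ILs 0))); [ring|rewrite <- W0; ring]).
    assert (E1 : (1 - al) * Kc * (IHs 1 + ILs 1) = ((1 - al) * Wf 1) * (qHL + beta0))
      by (transitivity ((1 - al) * (Kc * (IHs 1 + ILs 1))); [ring|rewrite <- W1; ring]).
    assert (Hr0 : rho <= IHs 0 + ILs 0).
    { apply Rmult_le_reg_l with ((1 - al) * Kc); [exact HKp|]. rewrite E, E0.
      apply Rmult_le_compat_r; lra. }
    assert (Hr1 : IHs 1 + ILs 1 <= rho).
    { apply Rmult_le_reg_l with ((1 - al) * Kc); [exact HKp|]. rewrite E, E1.
      apply Rmult_le_compat_r; lra. }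
    assert (Hpos : 0 < 1 - rho) by lra.
    set (c0 := w0 / (1 - rho)).
    assert (Hc0 : c0 * (1 - rho) = w0) by (unfold c0; field; lra).
    assert (Hc0le : c0 <= 1) by nra.
    assert (Hc0ge : al <= c0) by nra.
    set (z0 := (1 - c0) / (1 - al)).
    assert (Hz0 : 0 <= z0 <= 1).
    { unfold z0. split.
      - apply Rdiv_le_0_compat; lra.
      - apply Rmult_le_reg_r with (1 - al); [lra|]. unfold Rdiv.
        rewrite Rmult_assoc, Rinv_l by lra. lra. }
    assert (Hcz0 : al * z0 + 1 - z0 = c0) by (unfold z0; field; lra).
    assert (HDz0 : DeltaR bH bL al rhoH rhoL CP (IHs z0) (ILs z0) = 0).
    { rewrite DR_W. pose proof (c_S z0 Hz0) as Cz. rewrite Hcz0 in Cz.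
      assert (HS : IHs z0 + ILs z0 = rho).
      { assert (c0 * ((IHs z0 + ILs z0) - rho) = 0) by nra.
        apply Rmult_integral in H3. destruct H3; lra. }
      pose proof (W_rel z0 Hz0) as Wz. rewrite HS in Wz.
      assert ((qHL + beta0) * ((1 - al) * Wf z0 - CP) = 0) by nra.
      apply Rmult_integral in H3. destruct H3; lra. }
    assert (Huniq : forall z, 0 <= z <= 1 ->
          DeltaR bH bL al rhoH rhoL CP (IHs z) (ILs z) = 0 -> z = z0).
    { intros z Hz HD. apply W_inj; auto. rewrite DR_W in HD, HDz0.
      apply Rmult_eq_reg_l with (1 - al); lra. }
    exists z0. split; [split; assumption|]. split; [exact Huniq|].
    intros IH IL z HN. destruct (HNEz IH IL z HN) as [Hz [-> ->]].
    destruct HN as [_ [_ [NE0 [_ [NE1 [_ Hmid]]]]]].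
    apply Huniq; [exact Hz|].
    destruct (Req_dec z 0) as [Ez|Nz].
    + specialize (NE0 Ez). subst z. rewrite DR_W in *. lra.
    + destruct (Req_dec z 1) as [Ez1|Nz1].
      * specialize (NE1 Ez1). subst z. rewrite DR_W in *. lra.
      * apply Hmid. lra.
  - intros z Hz IH IL H. apply uniq; assumption.
  - intros IH IL z H. apply ne_endemic; exact H.
Qed.

End Main.

Theorem theorem4
  (bH bL gH gL qHL qLH al rhoH rhoL CP : R)
  (HbH : 0 < bH) (HbL : 0 < bL) (HgH : 0 < gH) (HgL : 0 < gL)
  (Hratio : bH / gH > bL / gL) (Hbeta : bH > bL)
  (HqHL : 0 <= qHL) (HqLH : 0 <= qLH)
  (Hal : 0 < al < 1) (HrhoH : 0 < rhoH) (HrhoL : 0 < rhoL) (HCP : 0 < CP)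
  (Hcond : Rmax (qLH + gL) (qHL + gH)
           <= Rmin (beta_hat al bH 1) (beta_hat al bL 1))
  (IHs ILs : R -> R)
  (Hend : forall z, 0 <= z <= 1 ->
     is_endemic_eq bH bL gH gL qHL qLH al z (IHs z) (ILs z)) :
  let Cmin := (1 - al) * (bH * rhoH * IHs 1 + bL * rhoL * ILs 1) in
  let Cmax := (1 - al) * (bH * rhoH * IHs 0 + bL * rhoL * ILs 0) in
  let NE := is_stationary_NE bH bL gH gL qHL qLH al rhoH rhoL CP in
  (* (a) *)
  (CP < Cmin -> forall IH IL z, NE IH IL z -> z = 1) /\
  (* (b) *)
  (CP > Cmax -> forall IH IL z, NE IH IL z -> z = 0) /\
  (* (c) *)
  (Cmin <= CP <= Cmax ->
     exists z0, (0 <= z0 <= 1 /\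
                 DeltaR bH bL al rhoH rhoL CP (IHs z0) (ILs z0) = 0) /\
       (forall z, 0 <= z <= 1 ->
          DeltaR bH bL al rhoH rhoL CP (IHs z) (ILs z) = 0 -> z = z0) /\
       (forall IH IL z, NE IH IL z -> z = z0)) /\
  (* Moreover: uniqueness of the endemic equilibrium, and the infected
     proportions at any stationary NE are at it. *)
  (forall z, 0 <= z <= 1 -> forall IH IL,
     is_endemic_eq bH bL gH gL qHL qLH al z IH IL -> IH = IHs z /\ IL = ILs z) /\
  (forall IH IL z, NE IH IL z -> IH = IHs z /\ IL = ILs z).
Proof.
  apply main_sec; assumption.
Qed.
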